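(* Let $G=(V,E)$ be an unweighted undirected graph, let $s\in V$ be a source, and suppose we are given, for every $v\in V$, the distance $d_s(v)$ from $s$, the number $\sigma_s(v)$ of shortest $s$-$v$ paths, and the list $P_s(v)$ of predecessors of $v$ (neighbors immediately preceding $v$ on shortest $s$-$v$ paths) in $G$. Let $\beta$ be a batch of edge insertions and let $d_{max}$ be the maximum distance from $s$ (the distance of the node furthest from $s$). Consider the algorithm \textsf{UpdateSSSP}, which assumes all nodes are initially colored white: (i) Create an array $Q[\,]$ of $d_{max}$ empty FIFO queues. For each $e=\{u,v\}\in\beta$: insert $e$ into $E$; if $d_s(u)<d_s(v)$, enqueue $v$ into $Q[d_s(u)+1]$; if $d_s(v)<d_s(u)$, enqueue $u$ into $Q[d_s(v)+1]$. (ii) For $k=1,2,\dots$ while $k<d_{max}$: while $Q[k]$ is nonempty, dequeue $w$ from $Q[k]$; if $w$ is black, skip it; otherwise color $w$ black, set $d_s(w)\leftarrow k$, $P_s(w)\leftarrow\emptyset$, $\sigma_s(w)\leftarrow 0$, and for each incident edge $\{z,w\}$: if $d_s(w)=d_s(z)+1$, add $z$ to $P_s(w)$ and set $\sigma_s(w)\leftarrow\sigma_s(w)+\sigma_s(z)$; if $z$ is white and $d_s(z)\ge d_s(w)+1$, color $z$ gray and enqueue $z$ into $Q[k+1]$. (iii) Reset to white all nodes that have been in some queue. Then the time required by \textsf{UpdateSSSP} to update the distances, the numbers of shortest paths and the lists of predecessors is $O(|\beta|+\|A\|+d_{max})$.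
   Context: $A$ denotes the set of affected nodes, i.e. nodes whose distance from $s$ or whose number of shortest paths from $s$ changes as a consequence of inserting the batch $\beta$; $\|A\|$ denotes $|A|$ plus the number of edges having at least one endpoint in $A$; $|\beta|$ is the number of edges in the batch. *)

(* Defs.v *)
(* Graphs: a finite vertex type V with a symmetric,
   irreflexive edge relation E : rel V (simple undirected unweighted graph). *)
From mathcomp Require Import all_boot.
Set Implicit Arguments. Unset Strict Implicit. Unset Printing Implicit Defensive.

Section SSSP.
Variable V : finType.

(** Number of walks with exactly n edges from s to v (as n-tuples of the
    vertices visited after s). *)
Definition walk_count (E : rel V) (s v : V) (n : nat) : nat :=
  #|[set t : n.-tuple V | path E s t && (last s t == v)]|.

(** Distance d_s(v) from s to v: [Some n] with n the least length of an
    s-v walk, or [None] (= +infinity) if v is unreachable.  A shortest walk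
    is a simple path, so it has fewer than #|V| edges; hence searching
    n in [0, #|V|) suffices. *)
Definition dist (E : rel V) (s v : V) : option nat :=
  let l := find (fun n => 0 < walk_count E s v n) (iota 0 #|V|) in
  if l < #|V| then Some l else None.

Definition nsp (E : rel V) (s v : V) : nat :=
  if dist E s v is Some n then walk_count E s v n else 0.

Definition olt (a b : option nat) : bool :=
  match a, b with
  | Some x, Some y => x < y
  | Some _, None => true
  | None, _ => false
  end.

Definition is_pred (E : rel V) (d : V -> option nat) (z v : V) : bool :=
  E z v && (if d z is Some m then d v == Some m.+1 else false).

Definition insert_batch (E : rel V) (beta : seq (V * V)) : rel V :=
  fun u v => [|| E u v, (u, v) \in beta | (v, u) \in beta].

Definition dmax (E : rel V) (s : V) : nat := \max_(v : V) odflt 0 (dist E s v).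

Definition affected (E : rel V) (beta : seq (V * V)) (s : V) : {set V} :=
  [set v | (dist E s v != dist (insert_batch E beta) s v)
           || (nsp E s v != nsp (insert_batch E beta) s v)].

Definition normA (E : rel V) (beta : seq (V * V)) (s : V) : nat :=
  let A := affected E beta s in
  let E' := insert_batch E beta in
  #|A| + #|[set e : {set V} | [exists u, exists v,
              (e == [set u; v]) && E' u v && ((u \in A) || (v \in A))]]|.

Inductive color := White | Gray | Black.
Definition is_white c := if c is White then true else false.
Definition is_black c := if c is Black then true else false.

Record state := St {
  col : V -> color;
  dd : V -> option nat;
  sg : V -> nat;
  pr : V -> seq V;
  Q : nat -> seq V;               (* array of FIFO queues (head = front) *)
  enq : seq V;                    (* nodes that have been in some queue *)
  cost : nat
}.

Definition upd {A : eqType} {B : Type} (f : A -> B) (x : A) (y : B) : A -> B :=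
  fun z => if z == x then y else f z.

Definition tick (st : state) : state :=
  St (col st) (dd st) (sg st) (pr st) (Q st) (enq st) (cost st).+1.

Definition enqueue (st : state) (k : nat) (x : V) : state :=
  St (col st) (dd st) (sg st) (pr st) (upd (Q st) k (rcons (Q st k) x))
     (x :: enq st) (cost st).+1.

Definition set_col (st : state) (x : V) (c : color) : state :=
  St (upd (col st) x c) (dd st) (sg st) (pr st) (Q st) (enq st) (cost st).

(* Step (i), for one inserted edge e = {u,v}: insert it (one step) and enqueue. *)
Definition batch_edge (st : state) (e : V * V) : state :=
  let: (u, v) := e in
  let st := tick st in
  let st := if olt (dd st u) (dd st v)
            then enqueue st (odflt 0 (dd st u)).+1 v else st in
  if olt (dd st v) (dd st u)
  then enqueue st (odflt 0 (dd st v)).+1 u else st.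

Definition process_nbr (k : nat) (w : V) (st : state) (z : V) : state :=
  let st := tick st in
  let st := if (if dd st z is Some m then dd st w == Some m.+1 else false)
            then St (col st) (dd st) (upd (sg st) w (sg st w + sg st z))
                    (upd (pr st) w (rcons (pr st w) z)) (Q st) (enq st) (cost st)
            else st in
  (* d_s(z) >= d_s(w) + 1, with d_s(z) = +infinity allowed *)
  if is_white (col st z) && olt (dd st w) (dd st z)
  then enqueue (set_col st z Gray) k.+1 z
  else st.

(* Step (ii), handling a node w dequeued from Q[k]; the incident edges of w
   in the updated graph E' are scanned through its adjacency list. *)
Definition process (E' : rel V) (k : nat) (st : state) (w : V) : state :=
  let st := tick st in
  if is_black (col st w) then st else
  let st := St (upd (col st) w Black) (upd (dd st) w (Some k)) (upd (sg st) w 0)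
               (upd (pr st) w [::]) (Q st) (enq st) (cost st) in
  foldl (process_nbr k w) st [seq z <- enum V | E' w z].

(* Empty Q[k] in FIFO order.  Processing level k only enqueues into Q[k+1],
   so Q[k] does not grow while it is being emptied. *)
Definition level (E' : rel V) (st : state) (k : nat) : state :=
  let st := tick st in
  let st' := foldl (process E' k) st (Q st k) in
  St (col st') (dd st') (sg st') (pr st') (upd (Q st') k [::]) (enq st') (cost st').

Definition reset_one (st : state) (x : V) : state := tick (set_col st x White).

Definition UpdateSSSP (E : rel V) (s : V) (beta : seq (V * V))
    (d : V -> option nat) (sigma : V -> nat) (P : V -> seq V) : state :=
  let E' := insert_batch E beta in
  let D := dmax E s in
  (* all nodes white; creating the array of d_max empty queues costs d_max *)
  let st0 := St (fun _ => White) d sigma P (fun _ => [::]) [::] D in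
  let st1 := foldl batch_edge st0 beta in
  let st2 := foldl (level E') st1 (iota 1 D.-1) in          (* step (ii): k = 1 .. d_max - 1 *)
  foldl reset_one st2 (enq st2).

End SSSP.

(* Main.v *)
Require Import Defs.
From mathcomp Require Import all_boot.
From mathcomp Require Import zify.
From Stdlib Require Import FunctionalExtensionality.
Set Implicit Arguments. Unset Strict Implicit. Unset Printing Implicit Defensive.

Section Graph.
Variable V : finType.
Implicit Types (E : rel V) (s v : V).

Lemma dist_walk E s v n : dist E s v = Some n ->
  exists t : seq V, [/\ size t = n, path E s t & last s t = v].
Proof.
rewrite /dist; set l := find _ _; case: ifP => // Hl [<-].
have Hh : has (fun n => 0 < walk_count E s v n) (iota 0 #|V|) by rewrite has_find size_iota.
have := nth_find 0 Hh; rewrite -/l nth_iota // add0n /walk_count card_gt0.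
case/set0Pn => t; rewrite inE => /andP [Hp /eqP Hlast].
by exists t; rewrite size_tuple.
Qed.

Lemma dist_le E s t : path E s t ->
  exists n, dist E s (last s t) = Some n /\ n <= size t.
Proof.
move=> Hp.
have key : forall v t', path E s t' -> last s t' = v -> size t' < #|V| ->
   exists n, dist E s v = Some n /\ n <= size t'.
  move=> v t' Hp' <- Hs'.
  have Hw : 0 < walk_count E s (last s t') (size t').
    rewrite /walk_count card_gt0; apply/set0Pn; exists (in_tuple t').
    by rewrite inE /= Hp' eqxx.
  have Hlt : find (fun n => 0 < walk_count E s (last s t') n) (iota 0 #|V|) <= size t'.
    rewrite -ltnS; apply: find_ltn; rewrite take_iota.
    apply/hasP; exists (size t') => //; rewrite mem_iota /= add0n.
    by rewrite leq_min ltnSn /=.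
  exists (find (fun n => 0 < walk_count E s (last s t') n) (iota 0 #|V|)).
  by rewrite /dist ifT // (leq_ltn_trans Hlt Hs').
case: (ltnP (size t) #|V|) => Hs; first by apply: key.
case: (shortenP Hp) => t' Hp' Hu _.
have Hs' : size t' < #|V|.
  by have := card_uniqP Hu; move=> /= <-; apply: max_card.
have [n [Hn Hle]] := key _ t' Hp' (erefl _) Hs'.
by exists n; split => //; apply: leq_trans Hle (ltnW (leq_trans Hs' Hs)).
Qed.
End Graph.

Section Aff.
Variable V : finType.
Variables (E : rel V) (s : V) (beta : seq (V * V)).
Local Notation E' := (insert_batch E beta).
Local Notation A := (affected E beta s).

Lemma subE u v : E u v -> E' u v.
Proof. by rewrite /insert_batch => ->. Qed.

Lemma path_sub t : path E s t -> path E' s t.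
Proof. by apply: sub_path => u v; apply: subE. Qed.

Lemma dist_mono v m : dist E s v = Some m ->
  exists n, dist E' s v = Some n /\ n <= m.
Proof.
case/dist_walk => t [Hs Hp Hl].
have [n [Hn Hle]] := dist_le (path_sub Hp).
by exists n; rewrite -Hl -Hs.
Qed.

Lemma aff_new x b t : dist E' s x = Some b -> size t = b -> path E' s t ->
  last s t = x -> ~~ path E s t -> x \in A.
Proof.
move=> Hd Hs Hp Hl Hnp; rewrite inE.
case: (eqVneq (dist E s x) (dist E' s x)) => [Heq|] //=.
rewrite /nsp Heq Hd.
set S1 := [set t0 : b.-tuple V | path E s t0 && (last s t0 == x)].
set S2 := [set t0 : b.-tuple V | path E' s t0 && (last s t0 == x)].
have Hsub : S1 \proper S2.
  apply/properP; split.
    apply/subsetP => t0; rewrite !inE => /andP [H1 ->].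
    by rewrite path_sub.
  have Hs' : size t == b by rewrite Hs.
  exists (Tuple Hs'); first by rewrite inE /= Hp Hl eqxx.
  by rewrite inE /= (negbTE Hnp).
by rewrite /walk_count -/S1 -/S2 neq_ltn (proper_card Hsub).
Qed.

Lemma step_i_aff u v a : dist E s u = Some a -> E' u v -> ~~ E u v ->
  olt (Some a) (dist E s v) ->
  v \in A /\ exists n, dist E' s v = Some n /\ n <= a.+1.
Proof.
move=> Hu Huv Hnuv Hlt.
have [t [Hs Hp Hl]] := dist_walk Hu.
have Hp' : path E' s (rcons t v) by rewrite rcons_path path_sub //= Hl.
have [n [Hn Hle]] := dist_le Hp'.
rewrite last_rcons size_rcons Hs in Hn Hle.
split; last by exists n.
case: (eqVneq (dist E s v) (dist E' s v)) => [Heq|Hne]; last by rewrite inE Hne.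
have Hna : n = a.+1.
  apply/eqP; rewrite eqn_leq Hle /=.
  by move: Hlt; rewrite Heq Hn.
apply: (aff_new Hn (t := rcons t v)); rewrite ?size_rcons ?Hs ?Hna ?last_rcons //.
by rewrite rcons_path Hl (negbTE Hnuv) andbF.
Qed.

Lemma step_ii_aff w z j k : w \in A -> dist E' s w = Some j -> j <= k ->
  E' w z -> olt (Some k) (dist E s z) ->
  z \in A /\ exists n, dist E' s z = Some n /\ n <= k.+1.
Proof.
move=> Hw Hdw Hjk Hwz Hlt.
have [t [Hs Hp Hl]] := dist_walk Hdw.
have Hp' : path E' s (rcons t z) by rewrite rcons_path Hp /= Hl.
have [n [Hn Hle]] := dist_le Hp'.
rewrite last_rcons size_rcons Hs in Hn Hle.
split; last by exists n; split => //; lia.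
case: (eqVneq (dist E s z) (dist E' s z)) => [Heq|Hne]; last by rewrite inE Hne.
have Hnk : n = k.+1.
  move: Hlt; rewrite Heq Hn /= => Hlt; lia.
have Hjk' : j = k.
  lia.
rewrite Hjk' in Hdw Hs.
have [t1 [Hs1 Hp1 Hl1 Hnp1]] : exists t1 : seq V,
    [/\ size t1 = k, path E' s t1, last s t1 = w & ~~ path E s t1].
  case: (eqVneq (dist E s w) (Some k)) => HdE.
  - move: Hw; rewrite inE HdE Hdw eqxx /= /nsp HdE Hdw /walk_count.
    set S1 := [set t0 : k.-tuple V | path E s t0 && (last s t0 == w)].
    set S2 := [set t0 : k.-tuple V | path E' s t0 && (last s t0 == w)].
    move=> Hne.
    have Hsub : S1 \subset S2.
      apply/subsetP => t0; rewrite !inE => /andP [H1 ->].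
      by rewrite path_sub.
    have Hns : ~~ (S2 \subset S1).
      apply/negP => H21; move: Hne; rewrite eqn_leq (subset_leq_card Hsub).
      by rewrite (subset_leq_card H21).
    case/subsetPn: Hns => t0; rewrite !inE => /andP [H1 H2].
    rewrite H2 andbT => H3.
    by exists t0; rewrite size_tuple; split => //; apply/eqP.
  - exists t; split => //; apply/negP => HE.
    have [m [Hm Hmle]] := dist_le HE.
    rewrite Hl Hs in Hm Hmle.
    have [n' [Hn' Hle']] := dist_mono Hm.
    rewrite Hdw in Hn'; case: Hn' => Hn'; subst n'.
    have : m = k by apply/eqP; rewrite eqn_leq Hmle Hle'.
    by move=> Hmk; move: HdE; rewrite Hm Hmk eqxx.
apply: (aff_new Hn (t := rcons t1 z)); rewrite ?size_rcons ?Hs1 ?Hnk ?last_rcons //.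
  by rewrite rcons_path Hp1 Hl1.
by rewrite rcons_path (negbTE Hnp1).
Qed.
End Aff.
Lemma sum_upd_le (F G : nat -> nat) i a b :
  (forall j, j != i -> F j = G j) -> F i <= (G i).+1 ->
  \sum_(a <= j < b) F j <= (\sum_(a <= j < b) G j).+1.
Proof.
move=> HFG Hi; elim: b => [|b IH]; first by rewrite !big_geq.
case: (leqP a b) => Hab; last by rewrite !big_geq.
rewrite !big_nat_recr //=.
have Hb : F b <= G b + (b == i).
  case: (eqVneq b i) => [->|Hne]; first by rewrite addn1.
  by rewrite HFG // addn0.
case: (eqVneq b i) Hb => [Hbi|Hne] Hb.
- subst b.
  have : \sum_(a <= j < i) F j <= \sum_(a <= j < i) G j.
    rewrite big_nat_cond [X in _ <= X]big_nat_cond; apply: leq_sum => j /andP [/andP [_ Hj] _]; rewrite HFG //; lia.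
  lia.
- rewrite addn0 in Hb; lia.
Qed.

Lemma sum_upd_eq (F G : nat -> nat) i a b :
  (forall j, j != i -> F j = G j) -> i < a ->
  \sum_(a <= j < b) F j = \sum_(a <= j < b) G j.
Proof.
move=> HFG Hi; apply: eq_big_nat => j /andP [Hj _]; apply: HFG; lia.
Qed.

Lemma chain_le a b c n : a <= b + 1 -> c <= a + n -> c <= b + n.+1.
Proof. lia. Qed.

Lemma chain7 a b c n : a <= b + 7 -> c <= a + n -> c <= b + (7 + n).
Proof. lia. Qed.

Section Acc.
Variable V : finType.
Variables (E : rel V) (s : V) (beta : seq (V * V)).
Hypothesis Esym : symmetric E.
Hypothesis Hbeta : forall u v, (u, v) \in beta -> (u != v) && ~~ E u v.
Local Notation E' := (insert_batch E beta).
Local Notation A := (affected E beta s).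
Local Notation D := (dmax E s).

Definition deg (w : V) := size [seq z <- enum V | E' w z].
Definition Pend (st : state V) k := \sum_(k <= j < D) size (Q st j).
Definition Wp (st : state V) :=
  \sum_(w in A) (if is_black (col st w) then 0 else (deg w).+1).
Definition Mc (st : state V) := cost st + size (enq st).
Definition Inv (st : state V) :=
  (forall x, ~~ is_black (col st x) -> dd st x = dist E s x) /\
  (forall j x, x \in Q st j -> x \in A /\ exists n, dist E' s x = Some n /\ n <= j).

Lemma Pend_enqueue st i x k : Pend (enqueue st i x) k <= (Pend st k).+1.
Proof.
apply: (sum_upd_le (i := i)) => [j Hj|]; rewrite /= /upd ?(negbTE Hj) //.
by rewrite eqxx size_rcons.
Qed.

Lemma Wp_eq st st' : (forall x, is_black (col st' x) = is_black (col st x)) ->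
  Wp st' = Wp st.
Proof. by move=> H; apply: eq_bigr => x _; rewrite H. Qed.

Lemma Inv_enqueue st i x : Inv st ->
  (x \in A /\ exists n, dist E' s x = Some n /\ n <= i) -> Inv (enqueue st i x).
Proof.
case=> H1 H2 Hx; split => //= j y; rewrite /upd.
case: (eqVneq j i) => [->|_]; last by apply: H2.
rewrite mem_rcons inE; case/orP => [/eqP ->|]; first by [].
by apply: H2.
Qed.

Lemma nbr_step k w j st z : Inv st -> col st w = Black -> dd st w = Some k ->
  w \in A -> dist E' s w = Some j -> j <= k -> E' w z ->
  let st' := process_nbr k w st z in
  [/\ Inv st', col st' w = Black, dd st' = dd st,
      (forall x, is_black (col st' x) = is_black (col st x)) &
      Mc st' + Pend st' k.+1 <= Mc st + Pend st k.+1 + 4].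
Proof.
move=> [H1 H2] Hcw Hdw HwA Hdw' Hjk Hwz /=.
rewrite /process_nbr.
set b := match dd (tick st) z with | Some m => _ | None => false end.
set st1 := (if b then _ else tick st).
have Hst1 : [/\ col st1 = col st, dd st1 = dd st, Q st1 = Q st, enq st1 = enq st
              & cost st1 = (cost st).+1].
  by rewrite /st1; case: ifP.
case: Hst1 => Hc1 Hd1 Hq1 He1 Hco1.
have Inv1 : Inv st1 by rewrite /Inv Hc1 Hd1 Hq1.
have HP1 : Pend st1 k.+1 = Pend st k.+1 by rewrite /Pend Hq1.
case: ifP => [/andP [Hwh Hlt]|_].
- have Hzw : z != w by apply/eqP => Hzw; move: Hwh; rewrite Hzw Hc1 Hcw.
  have Hdz : dd st1 z = dist E s z.
    by rewrite Hd1; apply: H1; move: Hwh; rewrite Hc1; case: (col st z).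
  rewrite Hdz Hd1 Hdw in Hlt.
  have Hz := step_ii_aff HwA Hdw' Hjk Hwz Hlt.
  split.
  + apply: Inv_enqueue => //; case: Inv1 => I1 I2; split => //= x.
    rewrite /upd; case: (eqVneq x z) => [->|_] //; by apply: I1.
  + by rewrite /= /upd eq_sym (negbTE Hzw) Hc1.
  + by rewrite /= Hd1.
  + move=> x; rewrite /= /upd; case: (eqVneq x z) => [->|_]; last by rewrite Hc1.
    by move: Hwh; rewrite Hc1; case: (col st z).
  + have := Pend_enqueue (set_col st1 z Gray) k.+1 z k.+1.
    rewrite /Mc /= He1 Hco1.
    have -> : Pend (set_col st1 z Gray) k.+1 = Pend st k.+1 by rewrite -HP1.
    lia.
- split => //; first by rewrite Hc1.
  + by move=> x; rewrite Hc1.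
  + by rewrite /Mc He1 Hco1 HP1; lia.
Qed.

Lemma nbr_fold k w j l st : Inv st -> col st w = Black -> dd st w = Some k ->
  w \in A -> dist E' s w = Some j -> j <= k -> (forall z, z \in l -> E' w z) ->
  let st' := foldl (process_nbr k w) st l in
  [/\ Inv st', (forall x, is_black (col st' x) = is_black (col st x)) &
      Mc st' + Pend st' k.+1 <= Mc st + Pend st k.+1 + 4 * size l].
Proof.
move=> + + + HwA Hdw' Hjk; elim: l st => [|z l IH] st Hinv Hcw Hdw Hl /=.
  by split => //; rewrite muln0 addn0.
have [I1 C1 D1 B1 M1] := nbr_step Hinv Hcw Hdw HwA Hdw' Hjk (Hl z (mem_head _ _)).
have [I2 B2 M2] := IH _ I1 C1 (etrans (f_equal (fun f => f w) D1) Hdw)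
  (fun z' Hz => Hl z' (mem_behead (s := z :: l) Hz)).
split => //; first by move=> x; rewrite B2 B1.
by rewrite mulnS; apply: (leq_trans M2); rewrite addnA leq_add2r.
Qed.

Lemma Wp_black st st2 w : w \in A -> ~~ is_black (col st w) ->
  col st2 = upd (col st) w Black -> Wp st = Wp st2 + (deg w).+1.
Proof.
move=> HwA Hnb Hc; rewrite /Wp (bigD1 w) //= (bigD1 w HwA) /= Hc /upd eqxx /=.
rewrite (negbTE Hnb) add0n addnC; congr (_ + _); apply: eq_bigr => x /andP [_ Hx].
by rewrite (negbTE Hx).
Qed.

Lemma process_step k w j st : Inv st -> w \in A -> dist E' s w = Some j -> j <= k ->
  let st' := process E' k st w in
  Inv st' /\ Mc st' + Pend st' k.+1 + 4 * Wp st' <= Mc st + Pend st k.+1 + 4 * Wp st + 1.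
Proof.
move=> [H1 H2] HwA Hdw' Hjk /=; rewrite /process.
case: ifP => Hb /=.
  split; first by split.
  by rewrite /Mc /Pend /Wp /=; lia.
set st2 := St _ _ _ _ _ _ _.
have Inv2 : Inv st2.
  split => //= x; rewrite /upd; case: (eqVneq x w) => [->|Hx]; first by [].
  by move=> Hnb; apply: H1.
have Hcw : col st2 w = Black by rewrite /= /upd eqxx.
have Hdw : dd st2 w = Some k by rewrite /= /upd eqxx.
have Hfl : forall z, z \in [seq z <- enum V | E' w z] -> E' w z.
  by move=> z; rewrite mem_filter => /andP [].
have [I3 B3 M3] := nbr_fold Inv2 Hcw Hdw HwA Hdw' Hjk Hfl.
split => //.
have HW := Wp_black HwA (negbT Hb) (erefl (col st2)).
rewrite (Wp_eq B3).
move: M3; rewrite /Mc /Pend /= -/(deg w) => M3.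
have -> : Wp st = Wp st2 + (deg w).+1 by [].
lia.
Qed.

Lemma proc_fold k l st : Inv st ->
  (forall w, w \in l -> w \in A /\ exists j, dist E' s w = Some j /\ j <= k) ->
  let st' := foldl (process E' k) st l in
  Inv st' /\ Mc st' + Pend st' k.+1 + 4 * Wp st' <= Mc st + Pend st k.+1 + 4 * Wp st + size l.
Proof.
elim: l st => [|w l IH] st Hinv Hl /=; first by split => //; rewrite addn0.
have [HwA [j [Hj Hjk]]] := Hl w (mem_head _ _).
have [I1 M1] := process_step Hinv HwA Hj Hjk.
have [I2 M2] := IH _ I1 (fun x Hx => Hl x (mem_behead (s := w :: l) Hx)).
split => //; move: M1 M2; generalize (foldl (process E' k) (process E' k st w) l) (process E' k st w) => X Y; exact: chain_le.
Qed.

Lemma level_step k st : Inv st -> k < D ->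
  let st' := level E' st k in
  Inv st' /\ Mc st' + Pend st' k.+1 + 4 * Wp st' <= Mc st + Pend st k + 4 * Wp st + 1.
Proof.
move=> Hinv HkD /=; rewrite /level.
have Inv0 : Inv (tick st) by case: Hinv.
have [[J1 J2] M1] := proc_fold (l := Q (tick st) k) Inv0 (fun x Hx => (proj2 Inv0) k x Hx).
set st' := foldl _ _ _ in J1 J2 M1 *.
split.
  split => //= j x; rewrite /upd; case: (eqVneq j k) => // _; by apply: J2.
have HP : Pend (St (col st') (dd st') (sg st') (pr st') (upd (Q st') k [::])
            (enq st') (cost st')) k.+1 = Pend st' k.+1.
  apply: (sum_upd_eq (i := k)) => // j Hj; by rewrite /= /upd (negbTE Hj).
rewrite HP.
have HPk : Pend st k = size (Q st k) + Pend st k.+1 by rewrite /Pend big_ltn.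
have HW : Wp (St (col st') (dd st') (sg st') (pr st') (upd (Q st') k [::])
            (enq st') (cost st')) = Wp st' by [].
rewrite HW HPk.
move: M1; rewrite /Mc /Pend /Wp /=; lia.
Qed.

Lemma levels_fold n a st : Inv st -> a + n <= D ->
  let st' := foldl (level E') st (iota a n) in
  Inv st' /\ Mc st' + Pend st' (a + n) + 4 * Wp st' <= Mc st + Pend st a + 4 * Wp st + n.
Proof.
elim: n a st => [|n IH] a st Hinv Han /=; first by rewrite addn0; split => //; lia.
have [I1 M1] := level_step (k := a) Hinv ltac:(lia).
have [I2 M2] := IH a.+1 _ I1 ltac:(lia).
split => //; rewrite addnS -addSn; lia.
Qed.

Lemma reset_fold l st : cost (foldl (@reset_one V) st l) = cost st + size l.
Proof.
elim: l st => [|x l IH] st /=; first by rewrite addn0.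
by rewrite IH /= addnS.
Qed.

Lemma reset_enq l st : enq (foldl (@reset_one V) st l) = enq st.
Proof. by elim: l st => [|x l IH] st //=; rewrite IH. Qed.

Lemma enq_ok x y : E' x y -> ~~ E x y -> olt (dist E s x) (dist E s y) ->
  y \in A /\ exists n, dist E' s y = Some n /\ n <= (odflt 0 (dist E s x)).+1.
Proof.
case Hx: (dist E s x) => [a|] // Hxy Hnxy Hlt.
exact: step_i_aff Hx Hxy Hnxy Hlt.
Qed.

Lemma batch_step st u v : (u, v) \in beta -> Inv st -> dd st = dist E s ->
  let st' := batch_edge st (u, v) in
  [/\ Inv st', dd st' = dd st & Mc st' + Pend st' 1 <= Mc st + Pend st 1 + 7].
Proof.
move=> Huv Hinv Hd /=.
have /andP [_ Hn] := Hbeta Huv.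
have Euv : E' u v by rewrite /insert_batch Huv orbT.
have Evu : E' v u by rewrite /insert_batch Huv !orbT.
have Hn' : ~~ E v u by rewrite Esym.
rewrite /batch_edge.
have Inv1 : Inv (tick st) by case: Hinv.
set st2 := (if _ then _ else tick st).
have [I2 D2 M2] : [/\ Inv st2, dd st2 = dd st & Mc st2 + Pend st2 1 <= Mc st + Pend st 1 + 4].
  rewrite /st2; case: ifP => /= H.
  - split => //.
      apply: Inv_enqueue => //; rewrite Hd in H; have := enq_ok Euv Hn H.
      by rewrite /= Hd.
    have := Pend_enqueue (tick st) ((odflt 0 (dd st u)).+1) v 1.
    rewrite /Mc /=; have -> : Pend (tick st) 1 = Pend st 1 by [].
    lia.
  - by split => //; rewrite /Mc /=; have -> : Pend (tick st) 1 = Pend st 1 by []; lia.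
case: ifP => /= H.
- split => //.
    apply: Inv_enqueue => //; rewrite D2 Hd in H; have := enq_ok Evu Hn' H.
    by rewrite D2 Hd.
  have := Pend_enqueue st2 ((odflt 0 (dd st2 v)).+1) u 1.
  move: M2; rewrite /Mc /=; lia.
- by split => //; lia.
Qed.

Lemma batch_fold l st : (forall e, e \in l -> e \in beta) -> Inv st -> dd st = dist E s ->
  let st' := foldl (@batch_edge V) st l in
  [/\ Inv st', dd st' = dd st & Mc st' + Pend st' 1 <= Mc st + Pend st 1 + 7 * size l].
Proof.
elim: l st => [|[u v] l IH] st Hl Hinv Hd /=; first by split => //; rewrite addn0.
have [I1 D1 M1] := batch_step (Hl _ (mem_head _ _)) Hinv Hd.
have [I2 D2 M2] := IH _ (fun e He => Hl e (mem_behead (s := (u, v) :: l) He)) I1 (etrans D1 Hd).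
split; first by [].
  by rewrite D2 D1.
rewrite mulnS; exact: (chain7 M1 M2).
Qed.

Lemma deg_sum w : deg w = \sum_(z | E' w z) 1.
Proof. by rewrite /deg -sum1_size big_filter big_enum_cond. Qed.

Lemma sum_deg : irreflexive E' ->
  \sum_(w in A) deg w <= 2 * #|[set e : {set V} | [exists u, exists v,
              (e == [set u; v]) && E' u v && ((u \in A) || (v \in A))]]|.
Proof.
move=> Hirr.
set ES := [set e : {set V} | _].
under eq_bigr do rewrite deg_sum.
rewrite pair_big_dep sum1dep_card.
set PS := [set p : V * V | (p.1 \in A) && E' p.1 p.2].
pose f (p : V * V) := ([set p.1; p.2], (enum_rank p.1 < enum_rank p.2)%N).
have Hinj : {in PS &, injective f}.
  move=> [a b] [c d]; rewrite !inE /= => /andP [_ Hab] /andP [_ Hcd] [Hset Hord].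
  have Hab' : a != b by apply/eqP => Hab'; move: Hab; rewrite Hab' Hirr.
  have Hcd' : c != d by apply/eqP => Hcd'; move: Hcd; rewrite Hcd' Hirr.
  have Ha : a \in [set c; d] by rewrite -Hset set21.
  have Hb : b \in [set c; d] by rewrite -Hset set22.
  case/set2P: Ha => Ha; case/set2P: Hb => Hb; subst.
  - by move: Hab'; rewrite eqxx.
  - by [].
  - exfalso; move: Hord; case: (ltngtP (enum_rank d) (enum_rank c)) => //.
    by move/val_inj/enum_rank_inj => Hdc; move: Hcd'; rewrite Hdc eqxx.
  - by move: Hab'; rewrite eqxx.
rewrite -(card_in_imset Hinj).
have Hsub : [set f x | x in PS] \subset setX ES [set: bool].
  apply/subsetP => y /imsetP [[a b] Hp ->]; rewrite inE /= in Hp.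
  case/andP: Hp => HaA Hab.
  rewrite !inE /= andbT; apply/existsP; exists a; apply/existsP; exists b.
  by rewrite eqxx Hab HaA.
apply: leq_trans (subset_leq_card Hsub) _.
by rewrite cardsX cardsT card_bool mulnC.
Qed.
End Acc.

Lemma final_arith D B nA nE sdeg W c1 m2 :
  c1 <= D + 7 * B -> W <= nA + sdeg -> sdeg <= 2 * nE ->
  m2 <= c1 + 4 * W + D.-1 ->
  m2 <= 8 * (B + (nA + nE) + D + 1).
Proof. lia. Qed.

Theorem theorem3 :
  exists c : nat, forall (V : finType) (E : rel V) (s : V) (beta : seq (V * V))
    (d : V -> option nat) (sigma : V -> nat) (P : V -> seq V),
    symmetric E -> irreflexive E ->
    (forall u v, (u, v) \in beta -> (u != v) && ~~ E u v) ->
    (forall v, d v = dist E s v) ->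
    (forall v, sigma v = nsp E s v) ->
    (forall v, P v =i [pred z | is_pred E (dist E s) z v]) ->
    cost (UpdateSSSP E s beta d sigma P)
      <= c * (size beta + normA E beta s + dmax E s + 1).
Proof.
exists 8 => V E s beta d sigma P Esym Eirr Hbeta Hd _ _.
have Hirr : irreflexive (insert_batch E beta).
  move=> x; rewrite /insert_batch Eirr /=; apply/negP => /orP [] H;
  by have := Hbeta _ _ H; rewrite eqxx.
rewrite /UpdateSSSP.
set D := dmax E s.
set st0 := St _ _ _ _ _ _ _.
have Inv0 : Inv E s beta st0.
  by split => //= x _; rewrite Hd.
have Dd0 : dd st0 = dist E s by apply: functional_extensionality => x; rewrite /= Hd.
have [I1 _ M1] := batch_fold Esym Hbeta (l := beta) (fun e He => He) Inv0 Dd0.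
set st1 := foldl _ st0 beta in I1 M1 *.
have HP0 : Pend E s st0 1 = 0 by rewrite /Pend big1.
have HM0 : Mc st0 = D by rewrite /Mc /= addn0.
rewrite HP0 HM0 addn0 in M1.
set st2 := foldl _ st1 _.
have HM2 : Mc st2 <= Mc st1 + Pend E s st1 1 + 4 * Wp E s beta st1 + D.-1.
  case HD: D.-1 => [|n].
    by rewrite /st2 HD /=; lia.
  have [_ H] := levels_fold (n := n.+1) (a := 1) I1 ltac:(lia).
  rewrite /st2 HD; move: H; lia.
rewrite reset_fold.
have HW : Wp E s beta st1 <= #|affected E beta s| + \sum_(w in affected E beta s) deg E beta w.
  rewrite -sum1_card addnC -big_split /=; apply: leq_sum => w _.
  by case: (is_black _); rewrite // addn1.
have HS := @sum_deg V E s beta Hirr.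
rewrite /normA.
exact: final_arith M1 HW HS HM2.
Qed.
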